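(* Let $\mathcal A,\mathcal B>0$, $\alpha,\beta\in(0,1)$, $h,\tau>0$, $M\ge 2$. Then the $(M-1)\times(M-1)$ matrices $A-g_0^{(\alpha,\beta)}B$ and $\widetilde A-g_0^{(\alpha,\beta)}\widetilde B$ (defined in the context) are nonsingular; consequently the time-stepping linear systems $$\big(A-g_0^{(\alpha,\beta)}B\big)\mathbf U^{k+1}=\big(A+g_1^{(\alpha,\beta)}B\big)\mathbf U^{k}+\sum_{\ell=2}^{k+1}g_\ell^{(\alpha,\beta)}B\,\mathbf U^{k+1-\ell}+\tau A\mathbf F^k+C_k$$ and $$\big(\widetilde A-g_0^{(\alpha,\beta)}\widetilde B\big)\mathbf U^{k+1}=\big(\widetilde A+g_1^{(\alpha,\beta)}\widetilde B\big)\mathbf U^{k}+\sum_{\ell=2}^{k+1}g_\ell^{(\alpha,\beta)}\widetilde B\,\mathbf U^{k+1-\ell}+\tau A\mathbf F^k+\widetilde C_k$$ are uniquely solvable for $\mathbf U^{k+1}$, for any given vectors $\mathbf U^0,\dots,\mathbf U^k,\mathbf F^k,C_k,\widetilde C_k\in\mathbb R^{M-1}$.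
   Context: $\varpi_\ell^{(\gamma)}=(-1)^\ell\binom{\gamma}{\ell}$, $g_0^{(\gamma)}=\frac{1+\gamma}{2}\varpi_0^{(\gamma)}$, $g_\ell^{(\gamma)}=\frac{1+\gamma}{2}\varpi_\ell^{(\gamma)}+\frac{1-\gamma}{2}\varpi_{\ell-1}^{(\gamma)}$ ($\ell\ge1$); $\mu_\alpha=\tau^\alpha\mathcal A/h^2$, $\mu_\beta=\tau^\beta\mathcal B/h^2$, $g_\ell^{(\alpha,\beta)}=\mu_\alpha g_\ell^{(1-\alpha)}+\mu_\beta g_\ell^{(1-\beta)}$. $A$ is the symmetric banded Toeplitz matrix of size $M-1$ with diagonal $\frac{14}{15}$, first off-diagonals $\frac{2}{45}$, second off-diagonals $-\frac1{90}$, zero elsewhere; $B$ is the symmetric banded Toeplitz matrix with diagonal $-\frac52$, first off-diagonals $\frac43$, second off-diagonals $-\frac1{12}$. $\widetilde A$ is the symmetric banded Toeplitz matrix with diagonal $\frac{27}{28}$, off-diagonals $\frac{3}{112}$, $-\frac{3}{280}$, $\frac1{560}$ (at distances $1,2,3$); $\widetilde B$ is the symmetric banded Toeplitz matrix with diagonal $-\frac{49}{18}$, off-diagonals $\frac32$, $-\frac{3}{20}$, $\frac1{90}$ (at distances $1,2,3$). These are the matrix forms of the sixth-order and eighth-order compact schemes for $u_t=(\mathcal A\,{}_{RL}D_{0,t}^{1-\alpha}+\mathcal B\,{}_{RL}D_{0,t}^{1-\beta})u_{xx}+f$, with $C_k,\widetilde C_k$ collecting boundary and ghost-point contributions. *)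

(* Defs.v *)
From HB Require Import structures.
From mathcomp Require Import all_boot all_order all_algebra.
From mathcomp Require Import reals exp.
Set Implicit Arguments. Unset Strict Implicit. Unset Printing Implicit Defensive.
Import Order.TTheory GRing.Theory Num.Theory.
Local Open Scope ring_scope.

Section Defs.
Variable R : realType.

Definition gbinom (gamma : R) (l : nat) : R :=
  \prod_(i < l) ((gamma - i%:R) / (i.+1)%:R).

Definition varpi (gamma : R) (l : nat) : R := (-1) ^+ l * gbinom gamma l.

Definition gw (gamma : R) (l : nat) : R :=
  match l with
  | 0 => (1 + gamma) / 2 * varpi gamma 0
  | l'.+1 => (1 + gamma) / 2 * varpi gamma l + (1 - gamma) / 2 * varpi gamma l'
  end.

Definition mu (tau gam cA h : R) : R := powR tau gam * cA / h ^+ 2.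

Definition gab (cA cB alpha beta tau h : R) (l : nat) : R :=
  mu tau alpha cA h * gw (1 - alpha) l + mu tau beta cB h * gw (1 - beta) l.

Definition ndist (i j : nat) : nat := (i - j) + (j - i).

Definition toeplitz (n : nat) (c : nat -> R) : 'M[R]_n :=
  \matrix_(i < n, j < n) c (ndist i j).

Definition cA6 (d : nat) : R :=
  match d with 0 => 14%:R / 15%:R | 1 => 2%:R / 45%:R | 2 => - (1 / 90%:R) | _ => 0 end.
Definition cB6 (d : nat) : R :=
  match d with 0 => - (5%:R / 2) | 1 => 4%:R / 3%:R | 2 => - (1 / 12%:R) | _ => 0 end.
Definition cA8 (d : nat) : R :=
  match d with 0 => 27%:R / 28%:R | 1 => 3%:R / 112%:R | 2 => - (3%:R / 280%:R)
  | 3 => 1 / 560%:R | _ => 0 end.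
Definition cB8 (d : nat) : R :=
  match d with 0 => - (49%:R / 18%:R) | 1 => 3%:R / 2 | 2 => - (3%:R / 20%:R)
  | 3 => 1 / 90%:R | _ => 0 end.

Definition matA n := toeplitz n cA6.
Definition matB n := toeplitz n cB6.
Definition matAt n := toeplitz n cA8.
Definition matBt n := toeplitz n cB8.
End Defs.

(* Main.v *)
Require Import Defs.
From HB Require Import structures.
From mathcomp Require Import all_boot all_order all_algebra.
From mathcomp Require Import reals exp.
From mathcomp Require Import zify ring lra.
Set Implicit Arguments.
Import Order.TTheory GRing.Theory Num.Theory.
Local Open Scope ring_scope.

Definition vext (R : realFieldType) n (x : 'rV[R]_n) (k : nat) : R :=
  if @insub _ (fun m => (m < n)%N) 'I_n k is Some i then x 0 i else 0.
Arguments vext {R n}.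

Lemma vextE {R : realFieldType} {n} (x : 'rV[R]_n) (i : 'I_n) : vext x i = x 0 i.
Proof. by rewrite /vext valK. Qed.

Lemma vext0 {R : realFieldType} {n} (x : 'rV[R]_n) k : (n <= k)%N -> vext x k = 0.
Proof. by move=> h; rewrite /vext insubF // ltnNge h. Qed.

Definition uext (R : realFieldType) n (x : 'rV[R]_n) (k : nat) : R :=
  if (3 <= k)%N then vext x (k - 3) else 0.
Arguments uext {R n}.

Lemma uext3 {R : realFieldType} {n} (x : 'rV[R]_n) k : uext x (k + 3) = vext x k.
Proof. by rewrite /uext leq_addl addnK. Qed.
Lemma uext_lo {R : realFieldType} {n} (x : 'rV[R]_n) k : (k < 3)%N -> uext x k = 0.
Proof. by move=> h; rewrite /uext leqNgt h. Qed.
Lemma uext_hi {R : realFieldType} {n} (x : 'rV[R]_n) k : (n + 3 <= k)%N -> uext x k = 0.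
Proof. move=> h; rewrite /uext; case: ifP => // _; apply: vext0; lia. Qed.

Definition W (R : realFieldType) n (x : 'rV[R]_n) d :=
  \sum_(0 <= i < n) vext x i * vext x (i + d).
Definition G (R : realFieldType) n (x : 'rV[R]_n) a b :=
  \sum_(0 <= k < n + 6) uext x (k + a) * uext x (k + b).
Arguments W {R n}. Arguments G {R n}.

Lemma shift1 (R : realFieldType) (f : nat -> R) N : f 0%N = 0 -> f N = 0 ->
  \sum_(0 <= k < N) f k.+1 = \sum_(0 <= k < N) f k.
Proof.
move=> h0 hN.
have e : \sum_(0 <= k < N.+1) f k = \sum_(0 <= k < N.+1) f k by [].
rewrite {1}big_nat_recl // big_nat_recr //= h0 hN addr0 add0r in e.
by rewrite e.
Qed.

Lemma Gshift {R : realFieldType} {n} (x : 'rV[R]_n) a b : (a < 3)%N ->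
  G x a.+1 b.+1 = G x a b.
Proof.
move=> ha; rewrite /G.
rewrite -(@shift1 _ (fun k => uext x (k + a) * uext x (k + b)) (n + 6)) /=.
- by apply: eq_bigr => k _; rewrite !addSnnS.
- by rewrite add0n uext_lo // mul0r.
- by rewrite uext_hi ?mul0r //; lia.
Qed.

Lemma GW0 {R : realFieldType} {n} (x : 'rV[R]_n) d : G x 3 (3 + d) = W x d.
Proof.
rewrite /G /W (big_cat_nat (leq0n n) (leq_addr 6 n)) /=.
rewrite [X in _ + X]big_nat_cond [X in _ + X]big1 ?addr0.
  apply: eq_bigr => k _; rewrite uext3.
  by rewrite (_ : (k + (3 + d) = k + d + 3)%N) ?uext3 //; lia.
move=> k /andP[/andP[hk _] _]; rewrite uext3 vext0 ?mul0r //.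
Qed.

Lemma GW {R : realFieldType} {n} (x : 'rV[R]_n) a d : (a <= 3)%N -> G x a (a + d) = W x d.
Proof.
have e2 : G x 2 (2 + d) = W x d by rewrite -(Gshift x 2 (2+d)) //; exact: GW0.
have e1 : G x 1 (1 + d) = W x d by rewrite -(Gshift x 1 (1+d)) //; exact: e2.
have e0 : G x 0 (0 + d) = W x d by rewrite -(Gshift x 0 (0+d)) //; exact: e1.
case: a => [|[|[|[|a]]]] // _.
exact: GW0.
Qed.

Lemma ge0_eq (R : realFieldType) (a b : R) : a = b -> 0 <= a -> 0 <= b.
Proof. by move->. Qed.

Lemma sos {R : realFieldType} {n} (x : 'rV[R]_n) (a0 a1 a2 a3 : R) :
  0 <= (a0^+2 + a1^+2 + a2^+2 + a3^+2) * W x 0 + 2 * (a0*a1 + a1*a2 + a2*a3) * W x 1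
      + 2 * (a0*a2 + a1*a3) * W x 2 + 2 * (a0 * a3) * W x 3.
Proof.
have H : 0 <= \sum_(0 <= k < n + 6) (a0 * uext x (k+0) + a1 * uext x (k+1)
     + a2 * uext x (k+2) + a3 * uext x (k+3)) ^+ 2.
  by apply: sumr_ge0 => k _; exact: sqr_ge0.
have E : \sum_(0 <= k < n + 6) (a0 * uext x (k+0) + a1 * uext x (k+1)
     + a2 * uext x (k+2) + a3 * uext x (k+3)) ^+ 2
  = a0^+2 * G x 0 0 + a1^+2 * G x 1 1 + a2^+2 * G x 2 2 + a3^+2 * G x 3 3
    + (2*a0*a1) * G x 0 1 + (2*a0*a2) * G x 0 2 + (2*a0*a3) * G x 0 3
    + (2*a1*a2) * G x 1 2 + (2*a1*a3) * G x 1 3 + (2*a2*a3) * G x 2 3.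
  rewrite /G !mulr_sumr -!big_split /=; apply: eq_bigr => k _; ring.
have g00 : G x 0 0 = W x 0 := GW x 0 0 isT.
have g11 : G x 1 1 = W x 0 := GW x 1 0 isT.
have g22 : G x 2 2 = W x 0 := GW x 2 0 isT.
have g33 : G x 3 3 = W x 0 := GW x 3 0 isT.
have g01 : G x 0 1 = W x 1 := GW x 0 1 isT.
have g12 : G x 1 2 = W x 1 := GW x 1 1 isT.
have g23 : G x 2 3 = W x 1 := GW x 2 1 isT.
have g02 : G x 0 2 = W x 2 := GW x 0 2 isT.
have g13 : G x 1 3 = W x 2 := GW x 1 2 isT.
have g03 : G x 0 3 = W x 3 := GW x 0 3 isT.
move: H; rewrite E g00 g11 g22 g33 g01 g12 g23 g02 g13 g03; apply: ge0_eq; ring.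
Qed.

Lemma b2n1 (a b : nat) : a = b -> nat_of_bool (a == b) = 1%N.
Proof. by move->; rewrite eqxx. Qed.
Lemma b2n0 (a b : nat) : a <> b -> nat_of_bool (a == b) = 0%N.
Proof. by move/eqP/negbTE->. Qed.
Ltac evb := repeat match goal with |- context[nat_of_bool (?a == ?b)] =>
  first [rewrite (@b2n1 a b); last lia | rewrite (@b2n0 a b); last lia] end.

Lemma Kdecomp {R : realFieldType} (c : nat -> R) : (forall k, (4 <= k)%N -> c k = 0) ->
  forall i j : nat, c (ndist i j) =
    c 0%N * (j == i + 0)%:R + c 1%N * ((j == i + 1)%:R + (i == j + 1)%:R)
    + c 2%N * ((j == i + 2)%:R + (i == j + 2)%:R) + c 3%N * ((j == i + 3)%:R + (i == j + 3)%:R).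
Proof.
move=> hc i j; rewrite /ndist.
have [H|[H|[H|[H|H]]]] : (i - j + (j - i) = 0 \/ i - j + (j - i) = 1 \/
   i - j + (j - i) = 2 \/ i - j + (j - i) = 3 \/ 4 <= i - j + (j - i))%N by lia.
all: first [rewrite H | rewrite (hc _ H)]; case: (leqP i j) => hij; try (exfalso; lia); evb; rewrite ?mulr0n ?mulr1n; ring.
Qed.

Lemma sum_ind (R : realFieldType) (f : nat -> R) N m :
  \sum_(0 <= j < N) (j == m)%:R * f j = if (m < N)%N then f m else 0.
Proof.
elim: N => [|N IH]; first by rewrite big_geq.
rewrite big_nat_recr //= IH.
have [->|hne] := eqVneq N m.
  by rewrite ltnn ltnSn ?eqxx ?mul1r add0r.
rewrite mul0r addr0.
have -> : (m < N.+1)%N = (m < N)%N by rewrite ltnS leq_eqVlt; case: eqP => // e; rewrite e eqxx in hne.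
by [].
Qed.

Lemma E1 {R : realFieldType} {n} (x : 'rV[R]_n) d :
  \sum_(0 <= i < n) \sum_(0 <= j < n) (j == i + d)%:R * (vext x i * vext x j) = W x d.
Proof.
apply: eq_bigr => i _.
under eq_bigr => j _ do rewrite mulrCA.
rewrite -mulr_sumr sum_ind; case: ifP => // h.
have : (n <= i + d)%N by rewrite leqNgt h.
by move/(vext0 x) ->; rewrite mulr0.
Qed.

Lemma E2 {R : realFieldType} {n} (x : 'rV[R]_n) d :
  \sum_(0 <= i < n) \sum_(0 <= j < n) (i == j + d)%:R * (vext x i * vext x j) = W x d.
Proof.
rewrite exchange_big /= -(E1 x d).
apply: eq_bigr => i _; apply: eq_bigr => j _; by rewrite [vext x j * _]mulrC.
Qed.

Lemma sumsumD (R : realFieldType) n (F H : nat -> nat -> R) :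
  \sum_(0 <= i < n) \sum_(0 <= j < n) (F i j + H i j) =
  \sum_(0 <= i < n) \sum_(0 <= j < n) F i j + \sum_(0 <= i < n) \sum_(0 <= j < n) H i j.
Proof. by under eq_bigr do rewrite big_split; rewrite big_split. Qed.

Lemma sumsumZ (R : realFieldType) n (a : R) (F : nat -> nat -> R) :
  \sum_(0 <= i < n) \sum_(0 <= j < n) (a * F i j) =
  a * \sum_(0 <= i < n) \sum_(0 <= j < n) F i j.
Proof. by under eq_bigr do rewrite -mulr_sumr; rewrite -mulr_sumr. Qed.

Lemma Qform {R : realFieldType} {n} (x : 'rV[R]_n) (c : nat -> R) :
  (forall k, (4 <= k)%N -> c k = 0) ->
  \sum_(0 <= i < n) \sum_(0 <= j < n) c (ndist i j) * (vext x i * vext x j)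
  = c 0%N * W x 0 + 2 * (c 1%N * W x 1 + c 2%N * W x 2 + c 3%N * W x 3).
Proof.
move=> hc.
have P : forall i j, c (ndist i j) * (vext x i * vext x j) =
  c 0%N * ((j == i + 0)%:R * (vext x i * vext x j))
  + c 1%N * ((j == i + 1)%:R * (vext x i * vext x j))
  + c 1%N * ((i == j + 1)%:R * (vext x i * vext x j))
  + c 2%N * ((j == i + 2)%:R * (vext x i * vext x j))
  + c 2%N * ((i == j + 2)%:R * (vext x i * vext x j))
  + c 3%N * ((j == i + 3)%:R * (vext x i * vext x j))
  + c 3%N * ((i == j + 3)%:R * (vext x i * vext x j)).
  by move=> i j; rewrite (Kdecomp c hc); ring.
under eq_bigr => i _ do under eq_bigr => j _ do rewrite P.
rewrite !sumsumD !sumsumZ !E1 !E2; ring.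
Qed.

Lemma qf_toeplitz {R : realType} {n} (x : 'rV[R]_n) (c : nat -> R) :
  (x *m toeplitz n c *m x^T) 0 0 =
  \sum_(0 <= i < n) \sum_(0 <= j < n) c (ndist i j) * (vext x i * vext x j).
Proof.
rewrite big_mkord mxE.
under eq_bigr => j _ do rewrite !mxE mulr_suml.
rewrite exchange_big /=.
apply: eq_bigr => i _; rewrite big_mkord; apply: eq_bigr => j _.
by rewrite /toeplitz !mxE !vextE; ring.
Qed.

Lemma W0pos {R : realFieldType} {n} (x : 'rV[R]_n) : x != 0 -> 0 < W x 0.
Proof.
move=> hx.
have e : W x 0 = \sum_(i < n) x 0 i * x 0 i.
  by rewrite /W big_mkord; apply: eq_bigr => i _; rewrite addn0 vextE.
have h0 : forall i : 'I_n, true -> 0 <= x 0 i * x 0 i by move=> i _; rewrite -expr2 sqr_ge0.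
rewrite e lt_def sumr_ge0 // andbT; apply/eqP => hs.
move/eqP: hx; apply; apply/rowP => i; rewrite mxE.
have H1 : x 0 i * x 0 i = 0 by apply: (psumr_eq0P h0 hs).
move/eqP: H1; rewrite mulf_eq0 orbb => /eqP ->.
by [].
Qed.

Lemma unit_of_pd (R : realFieldType) n (T : 'M[R]_n) :
  (forall x : 'rV_n, x != 0 -> 0 < (x *m T *m x^T) 0 0) -> T \in unitmx.
Proof.
move=> H; rewrite unitmxE unitfE; apply/negP => /det0P [v vn0 vT].
by have := H v vn0; rewrite vT mul0mx mxE ltxx.
Qed.

Lemma band {R : realType} (g : R) (a b : nat -> R) :
  (forall k, (4 <= k)%N -> a k = 0) -> (forall k, (4 <= k)%N -> b k = 0) ->
  forall k, (4 <= k)%N -> a k - g * b k = 0.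
Proof. by move=> ha hb k hk; rewrite ha ?hb ?mulr0 ?subr0. Qed.

Lemma band6A {R : realType} : forall k, (4 <= k)%N -> cA6 R k = 0.
Proof. by case=> [|[|[|[|k]]]]. Qed.
Lemma band6B {R : realType} : forall k, (4 <= k)%N -> cB6 R k = 0.
Proof. by case=> [|[|[|[|k]]]]. Qed.
Lemma band8A {R : realType} : forall k, (4 <= k)%N -> cA8 R k = 0.
Proof. by case=> [|[|[|[|k]]]]. Qed.
Lemma band8B {R : realType} : forall k, (4 <= k)%N -> cB8 R k = 0.
Proof. by case=> [|[|[|[|k]]]]. Qed.

Lemma unit6 {R : realType} n (g : R) : 0 < g -> (matA R n - g *: matB R n) \in unitmx.
Proof.
move=> gp; apply: unit_of_pd => x hx.
have -> : matA R n - g *: matB R n = toeplitz n (fun d => cA6 R d - g * cB6 R d).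
  by apply/matrixP => i j; rewrite /matA /matB /toeplitz !mxE.
rewrite qf_toeplitz.
rewrite (Qform x (fun d => cA6 R d - g * cB6 R d)); last exact: band band6A band6B.
have w0 := W0pos x hx.
have s1 := sos x 1 (-1) 0 0.
have s2 := sos x 1 (-2) 1 0.
have b1 := sos x 1 1 0 0.
have b2 := sos x 1 0 1 0.
have b2' := sos x 1 0 (-1) 0.
have hqb : 0 <= 5/2 * W x 0 - 8/3 * W x 1 + 1/6 * W x 2 by lra.
have := mulr_ge0 (ltW gp) hqb.
rewrite /=. lra.
Qed.

Lemma unit8 {R : realType} n (g : R) : 0 < g -> (matAt R n - g *: matBt R n) \in unitmx.
Proof.
move=> gp; apply: unit_of_pd => x hx.
have -> : matAt R n - g *: matBt R n = toeplitz n (fun d => cA8 R d - g * cB8 R d).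
  by apply/matrixP => i j; rewrite /matAt /matBt /toeplitz !mxE.
rewrite qf_toeplitz.
rewrite (Qform x (fun d => cA8 R d - g * cB8 R d)); last exact: band band8A band8B.
have w0 := W0pos x hx.
have s1 := sos x 1 (-1) 0 0.
have s2 := sos x 1 (-2) 1 0.
have s3 := sos x 1 (-3) 3 (-1).
have b1 := sos x 1 1 0 0.
have b2' := sos x 1 0 (-1) 0.
have b3 := sos x 1 0 0 1.
have hqb : 0 <= 49/18 * W x 0 - 3 * W x 1 + 3/10 * W x 2 - 1/45 * W x 3 by lra.
have := mulr_ge0 (ltW gp) hqb.
rewrite /=. lra.
Qed.

Lemma uniq_solve {R : realType} n (T : 'M[R]_n) (b : 'cV[R]_n) : T \in unitmx ->
  exists! V : 'cV[R]_n, T *m V = b.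
Proof.
move=> hT; exists (invmx T *m b); split.
  by rewrite mulmxA mulmxV ?mul1mx.
by move=> V hV; rewrite -hV mulmxA mulVmx ?mul1mx.
Qed.

Theorem theorem1 (R : realType) (cA cB alpha beta h tau : R) (M : nat)
  (hA : 0 < cA) (hB : 0 < cB)
  (ha0 : 0 < alpha) (ha1 : alpha < 1) (hb0 : 0 < beta) (hb1 : beta < 1)
  (hh : 0 < h) (htau : 0 < tau) (hM : (2 <= M)%N) :
  let n := M.-1 in
  let g := gab cA cB alpha beta tau h in
  let A := matA R n in let B := matB R n in
  let At := matAt R n in let Bt := matBt R n in
  (A - g 0%N *: B) \in unitmx /\ (At - g 0%N *: Bt) \in unitmx /\
  (forall (k : nat) (U : nat -> 'cV[R]_n) (F C Ct : 'cV[R]_n),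
     (exists! V : 'cV[R]_n,
        (A - g 0%N *: B) *m V =
          (A + g 1%N *: B) *m U k
          + \sum_(2 <= l < k.+2) (g l *: B) *m U (k.+1 - l)%N
          + tau *: (A *m F) + C) /\
     (exists! V : 'cV[R]_n,
        (At - g 0%N *: Bt) *m V =
          (At + g 1%N *: Bt) *m U k
          + \sum_(2 <= l < k.+2) (g l *: Bt) *m U (k.+1 - l)%N
          + tau *: (A *m F) + Ct)).
Proof.
move=> n g A B At Bt.
have gp : 0 < g 0%N.
  rewrite /g /gab /mu /gw /varpi /gbinom !big_ord0 !expr0 ?mulr1 ?mul1r ?mulr1.
  have p1 : 0 < powR tau alpha * cA / h ^+ 2 by rewrite divr_gt0 ?mulr_gt0 ?powR_gt0 ?exprn_gt0.
  have p2 : 0 < powR tau beta * cB / h ^+ 2 by rewrite divr_gt0 ?mulr_gt0 ?powR_gt0 ?exprn_gt0.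
  have q1 : 0 < (1 + (1 - alpha)) / 2 by lra.
  have q2 : 0 < (1 + (1 - beta)) / 2 by lra.
  by apply: addr_gt0; apply: mulr_gt0.
have u1 := unit6 n (g 0%N) gp. have u2 := unit8 n (g 0%N) gp.
split => //; split => // k U F C Ct; split; exact: uniq_solve.
Qed.
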